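(* Let $m\ge 2$, let $n_1,\dots,n_m\ge 5$ be odd, and let $\mathcal{C}=\mathcal{C}(C_{n_1},\dots,C_{n_m})$ be the odd chain cycle. Then the vertex cover number of its strong resolving graph is $$\alpha(\mathcal{C}_{SR})=m-1+\left\lfloor\frac{n_1}{2}\right\rfloor+\left\lfloor\frac{n_m}{2}\right\rfloor+\sum_{i=2}^{m-1}\left\lfloor\frac{n_i-2}{2}\right\rfloor.$$
   Context: Let $C_{n_1},\dots,C_{n_m}$ be pairwise disjoint cycles, $V(C_{n_i})=\{v^i_1,\dots,v^i_{n_i}\}$ with $v^i_j$ adjacent to $v^i_{j+1}$ (indices mod $n_i$). The odd chain cycle (all $n_i$ odd) is obtained by identifying $v^i_{(n_i+1)/2+1}$ with $v^{i+1}_1$ for $i=1,\dots,m-1$. A vertex $u$ is maximally distant from $v$ if every neighbor $w$ of $u$ satisfies $d(v,w)\le d(u,v)$; $u,v$ are mutually maximally distant if each is maximally distant from the other. The strong resolving graph $G_{SR}$ of a connected graph $G$ has vertex set $V(G)$, with $u,v$ adjacent iff they are mutually maximally distant in $G$. $\alpha(H)$ denotes the minimum size of a vertex cover of $H$. *)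

(* Defs.v *)
From mathcomp Require Import all_boot.
Set Implicit Arguments. Unset Strict Implicit. Unset Printing Implicit Defensive.

Fixpoint walkb (T : finType) (e : rel T) (k : nat) (u v : T) : bool :=
  match k with
  | 0 => u == v
  | k'.+1 => [exists w, e u w && walkb e k' w v]
  end.

(* Graph distance: the least k with a walk of length k from u to v.
   (In a connected graph on |T| vertices it is < |T|; this is the usual distance.) *)
Definition dist (T : finType) (e : rel T) (u v : T) : nat :=
  find (fun k => walkb e k u v) (iota 0 #|T|).

Definition max_dist_from (T : finType) (e : rel T) (u v : T) : bool :=
  [forall w, e u w ==> (dist e v w <= dist e u v)].

Definition mutually_max_dist (T : finType) (e : rel T) (u v : T) : bool :=
  max_dist_from e u v && max_dist_from e v u.

Definition strong_resolving_graph (T : finType) (e : rel T) : rel T :=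
  fun u v => (u != v) && mutually_max_dist e u v.

Definition vertex_cover (T : finType) (e : rel T) (S : {set T}) : bool :=
  [forall u, forall v, e u v ==> (u \in S) || (v \in S)].

Definition vertex_cover_number (T : finType) (e : rel T) : nat :=
  \big[minn/#|T|]_(S : {set T} | vertex_cover e S) #|S|.

(* Cycles are indexed by i : 'I_m, cycle i (0-based) being C_{n (i+1)};
   its vertex j : 'I_(n (i+1)) is v^{i+1}_{j+1}. *)
Definition cyc_vert (m : nat) (n : nat -> nat) := {i : 'I_m & 'I_(n i.+1)}.

Definition cyc_adj (m : nat) (n : nat -> nat) (a b : cyc_vert m n) : bool :=
  (tag a == tag b :> nat) &&
  ((val (tagged b) == (val (tagged a)).+1 %% n (tag a).+1) ||
   (val (tagged a) == (val (tagged b)).+1 %% n (tag a).+1)).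

(* a (in the disjoint union) is glued to u: either a = u, or a = v^{i+1}_1 with
   i >= 1 (0-based cycle index) and u = v^{i}_{(n_i+1)/2+1}, i.e. 0-based
   cycle index i-1 and 0-based position (n_i+1)/2. *)
Definition glued (m : nat) (n : nat -> nat) (a u : cyc_vert m n) : bool :=
  (a == u) ||
  [&& 0 < tag a, val (tagged a) == 0, (tag u).+1 == tag a
    & val (tagged u) == (n (tag a) + 1)./2].

(* canonical representatives: all vertices except the v^{i+1}_1, i >= 2 (1-based) *)
Definition canon (m : nat) (n : nat -> nat) (a : cyc_vert m n) : bool :=
  ~~ ((0 < tag a) && (val (tagged a) == 0)).

Definition chain_vert (m : nat) (n : nat -> nat) := {a : cyc_vert m n | canon a}.

(* adjacency of the odd chain cycle (quotient of the disjoint union of cycles) *)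
Definition chain_adj (m : nat) (n : nat -> nat) : rel (chain_vert m n) :=
  fun u v => [exists a, exists b,
               [&& cyc_adj a b, glued a (val u) & glued b (val v)]].

Arguments chain_adj m n : clear implicits.

(* Main.v *)
Require Import Defs.
From mathcomp Require Import all_boot.
From mathcomp Require Import zify.
Set Implicit Arguments. Unset Strict Implicit. Unset Printing Implicit Defensive.

Lemma walk_lb (T : finType) (e : rel T) (v : T) (f : T -> nat) :
  f v = 0 -> (forall x y, e x y -> f x <= (f y).+1) ->
  forall k x, walkb e k x v -> f x <= k.
Proof.
move=> f0 Hl; elim=> [|k IH] x /=; first by move/eqP->; rewrite f0.
case/existsP=> w /andP[exw /IH Hw]; exact: leq_trans (Hl _ _ exw) _.
Qed.

Lemma walk_ex (T : finType) (e : rel T) (v : T) (f : T -> nat) :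
  (forall x, f x = 0 -> x = v) ->
  (forall x, 0 < f x -> exists y, e x y /\ (f y).+1 = f x) ->
  forall x, walkb e (f x) x v.
Proof.
move=> H0 Hd x; move Hd': (f x) => d; elim: d x Hd' => [|d IH] x Hx /=.
  by rewrite (H0 _ Hx).
have [y [exy Hy]] := Hd x (ltac:(by rewrite Hx)).
apply/existsP; exists y; rewrite exy /=; apply: IH; rewrite Hx in Hy; by case: Hy.
Qed.

Lemma pot_bound (T : finType) (e : rel T) (f : T -> nat) :
  (forall x, 0 < f x -> exists y, e x y /\ (f y).+1 = f x) ->
  forall x, f x < #|T|.
Proof.
move=> Hd x.
have Hall : forall d x, f x = d -> forall t, t <= d -> exists y, f y = t.
  elim=> [|d IH] z Hz t Ht; first by exists z; rewrite Hz; apply/eqP; rewrite eq_sym -leqn0.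
  case: (ltngtP t d.+1) Ht => // [Htl _ | -> _]; last by exists z.
  have [y [_ Hy]] := Hd z (ltac:(by rewrite Hz)).
  rewrite Hz in Hy; case: Hy => Hy; exact: (IH y Hy t).
have sub : {subset iota 0 (f x).+1 <= undup (map f (enum T))}.
  move=> t; rewrite mem_iota add0n /= => Ht.
  have [y Hy] := Hall _ x erefl t Ht.
  by rewrite mem_undup -Hy; apply: map_f; rewrite mem_enum.
have := uniq_leq_size (iota_uniq 0 (f x).+1) sub.
rewrite size_iota => H; apply: (leq_trans H).
by rewrite cardE -(size_map f); apply: size_undup.
Qed.

Lemma dist_char (T : finType) (e : rel T) (v : T) (f : T -> nat) :
  f v = 0 -> (forall x, f x = 0 -> x = v) ->
  (forall x y, e x y -> f x <= (f y).+1) ->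
  (forall x, 0 < f x -> exists y, e x y /\ (f y).+1 = f x) ->
  forall x, dist e x v = f x.
Proof.
move=> f0 H0 Hl Hd x; rewrite /dist.
set P := fun k => walkb e k x v.
have Hb := pot_bound Hd x.
have Hw : P (f x) := walk_ex H0 Hd x.
have Hhas : has P (iota 0 #|T|).
  by apply/hasP; exists (f x) => //; rewrite mem_iota.
have Hfs : find P (iota 0 #|T|) < #|T|.
  by rewrite -[X in _ < X](size_iota 0) -has_find.
have := nth_find 0 Hhas; rewrite nth_iota // add0n => /(walk_lb f0 Hl) H1.
case: (ltnP (f x) (find P (iota 0 #|T|))) => H2; last by apply/eqP; rewrite eqn_leq H1 H2.
have := before_find 0 H2; rewrite nth_iota // add0n.
by move=> Hf; rewrite Hf in Hw.
Qed.

Lemma path_cover (T : eqType) (r : rel T) (C : pred T) :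
  (forall x y, r x y -> C x || C y) ->
  forall s x, path r x s ->
  size s + C x + C (last x s) <= 2 * count C (x :: s).
Proof.
move=> Hr; elim=> [|y s IH] x /=; first by rewrite addn0; case: (C x).
case/andP=> /Hr Hxy /IH; rewrite /= => H.
move: Hxy H; case: (C x); case: (C y) => //= _; lia.
Qed.

Definition cadj (N p q : nat) : bool := (q == (p + 1) %% N) || (p == (q + 1) %% N).
Definition absd (p q : nat) := (p - q) + (q - p).
Definition cd (N p q : nat) := minn (absd p q) (N - absd p q).

Lemma modS1 N p : p < N -> (p + 1) %% N = if p + 1 == N then 0 else p + 1.
Proof.
move=> h; case: eqP => [->|ne]; first by rewrite modnn.
by rewrite modn_small //; lia.
Qed.

Lemma cadjE N p q : p < N -> q < N ->
  cadj N p q <-> (q = p + 1 \/ p = q + 1 \/ (p = N - 1 /\ q = 0) \/ (q = N - 1 /\ p = 0)).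
Proof.
move=> hp hq; rewrite /cadj (modS1 hp) (modS1 hq).
case: ifP => /eqP e1; case: ifP => /eqP e2;
  (split => [/orP [/eqP|/eqP]|h]; [lia|lia|]);
  apply/orP; (case: eqP => h1; [by left|right; apply/eqP; lia]).
Qed.

Lemma cd_sym N p q : cd N p q = cd N q p.
Proof. rewrite /cd /absd; lia. Qed.

Lemma cd_le K p q : p < K.*2.+1 -> q < K.*2.+1 -> cd K.*2.+1 p q <= K.
Proof. rewrite /cd /absd; lia. Qed.

Lemma cd_eq0 K p q : p < K.*2.+1 -> q < K.*2.+1 -> (cd K.*2.+1 p q == 0) = (p == q).
Proof. move=> hp hq; apply/eqP/eqP; rewrite /cd /absd; lia. Qed.

Lemma cd_lip K p q t : p < K.*2.+1 -> q < K.*2.+1 -> t < K.*2.+1 ->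
  cadj K.*2.+1 p q -> cd K.*2.+1 p t <= (cd K.*2.+1 q t).+1.
Proof.
move=> hp hq ht /(cadjE hp hq); rewrite /cd /absd; lia.
Qed.

Lemma cd_desc K p t : p < K.*2.+1 -> t < K.*2.+1 -> 0 < cd K.*2.+1 p t ->
  exists q, [/\ q < K.*2.+1, cadj K.*2.+1 p q & (cd K.*2.+1 q t).+1 = cd K.*2.+1 p t].
Proof.
move=> hp ht hpos.
have ex : forall q, q < K.*2.+1 -> (q = p + 1 \/ p = q + 1 \/ (p = K.*2.+1 - 1 /\ q = 0) \/ (q = K.*2.+1 - 1 /\ p = 0)) ->
   (cd K.*2.+1 q t).+1 = cd K.*2.+1 p t ->
  exists q, [/\ q < K.*2.+1, cadj K.*2.+1 p q & (cd K.*2.+1 q t).+1 = cd K.*2.+1 p t].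
  by move=> q hq ha hc; exists q; split => //; apply/(cadjE hp hq).
move: hpos; rewrite /cd /absd => hpos.
case: (ltnP p t) => hpt.
  case: (leqP (t - p) K) => hk.
    by apply: (ex (p + 1)); rewrite /cd /absd; lia.
  case: (posnP p) => hp0.
    by apply: (ex (K.*2)); rewrite /cd /absd; lia.
  by apply: (ex (p - 1)); rewrite /cd /absd; lia.
case: (leqP (p - t) K) => hk.
  by apply: (ex (p - 1)); rewrite /cd /absd; lia.
case: (ltnP (p + 1) K.*2.+1) => hp1.
  by apply: (ex (p + 1)); rewrite /cd /absd; lia.
by apply: (ex 0); rewrite /cd /absd; lia.
Qed.

Lemma cd_xx N p : cd N p p = 0.
Proof. rewrite /cd /absd; lia. Qed.
Lemma cd_0H K : cd K.*2.+1 0 K.+1 = K.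
Proof. rewrite /cd /absd; lia. Qed.
Lemma cd_H0 K : cd K.*2.+1 K.+1 0 = K.
Proof. rewrite /cd /absd; lia. Qed.

Lemma cv_inj m n (a b : cyc_vert m n) :
  tag a = tag b :> nat -> val (tagged a) = val (tagged b) -> a = b.
Proof.
case: a => i p; case: b => j q /= /val_inj Hij; subst j => /val_inj -> //.
Qed.

Lemma cv_eqE m n (a b : cyc_vert m n) :
  (a == b) = (tag a == tag b :> nat) && (val (tagged a) == val (tagged b)).
Proof.
apply/eqP/andP => [->//|[/eqP h1 /eqP h2]]; exact: cv_inj.
Qed.

Definition ci m n (x : chain_vert m n) : nat := tag (val x).
Definition cp m n (x : chain_vert m n) : nat := val (tagged (val x)).

Lemma ci_lt m n (x : chain_vert m n) : ci x < m.
Proof. by rewrite /ci. Qed.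
Lemma cp_lt m n (x : chain_vert m n) : cp x < n (ci x).+1.
Proof. by rewrite /cp /ci; case: (tagged (val x)). Qed.
Lemma cp_canon m n (x : chain_vert m n) : (ci x == 0) || (cp x != 0).
Proof.
by case: x => a /=; rewrite /canon /ci /cp /= negb_and -eqn0Ngt.
Qed.

Lemma cv_ext m n (x y : chain_vert m n) : ci x = ci y -> cp x = cp y -> x = y.
Proof. by move=> h1 h2; apply: val_inj; apply: cv_inj. Qed.

Lemma cv_ex m n i p : i < m -> p < n i.+1 -> (i == 0) || (p != 0) ->
  exists x : chain_vert m n, ci x = i /\ cp x = p.
Proof.
move=> Hi Hp Hc.
pose a : cyc_vert m n := @Tagged _ (Ordinal Hi) (fun i : 'I_m => 'I_(n i.+1)) (Ordinal Hp).
have ca : canon a by rewrite /canon /= negb_and -eqn0Ngt.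
by exists (exist _ a ca).
Qed.

Definition rep m n (i p : nat) (x : chain_vert m n) : bool :=
  ((i == ci x) && (p == cp x)) ||
  [&& 0 < i, p == 0, (ci x).+1 == i & cp x == (n i + 1)./2].


Lemma glued_rep m n (a : cyc_vert m n) (x : chain_vert m n) :
  glued a (val x) = rep (tag a) (val (tagged a)) x.
Proof. by rewrite /glued /rep cv_eqE. Qed.

Lemma adjE m n (x y : chain_vert m n) :
  chain_adj m n x y <->
  exists i p q, [/\ i < m, p < n i.+1, q < n i.+1 & [&& cadj (n i.+1) p q, rep i p x & rep i q y]].
Proof.
split.
  case/existsP=> a /existsP[b /and3P[hab hx hy]].
  move: hab; rewrite /cyc_adj => /andP[/eqP ht hp].
  exists (tag a), (val (tagged a)), (val (tagged b)); split => //.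
  - exact: ltn_ord.
  - by case: b ht {hy hp} => /= j q ->.
  apply/and3P; split.
  - by rewrite /cadj !addn1.
  - by rewrite -glued_rep.
  - by rewrite ht -glued_rep.
case=> i [p [q [Hi Hp Hq /and3P[Hpq Hx Hy]]]].
pose a : cyc_vert m n := @Tagged _ (Ordinal Hi) (fun i : 'I_m => 'I_(n i.+1)) (Ordinal Hp).
pose b : cyc_vert m n := @Tagged _ (Ordinal Hi) (fun i : 'I_m => 'I_(n i.+1)) (Ordinal Hq).
apply/existsP; exists a; apply/existsP; exists b.
rewrite !glued_rep /= Hx Hy /cyc_adj /= eqxx /= andbT.
by rewrite /cadj !addn1 in Hpq.
Qed.

Definition good m (n : nat -> nat) := forall i, i < m -> 5 <= n i.+1 /\ odd (n i.+1).
Definition Kc (n : nat -> nat) i := (n i.+1)./2.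
Definition Hc (n : nat -> nat) i := (n i.+1 + 1)./2.
Definition Sc n a b := \sum_(a <= l < b) Kc n l.

Definition Pd n i p j q :=
  if i == j then cd (n i.+1) p q
  else if i < j then cd (n i.+1) p (Hc n i) + Sc n i.+1 j + cd (n j.+1) 0 q
  else cd (n j.+1) q (Hc n j) + Sc n j.+1 i + cd (n i.+1) 0 p.

Definition tgt n i j q := if i == j then q else if i < j then Hc n i else 0.
Definition cst n i j q :=
  if i == j then 0 else if i < j then Sc n i.+1 j + cd (n j.+1) 0 q
  else cd (n j.+1) q (Hc n j) + Sc n j.+1 i.

Lemma Pd_split n i p j q : Pd n i p j q = cst n i j q + cd (n i.+1) p (tgt n i j q).
Proof.
rewrite /Pd /cst /tgt; case: ifP => _ //; case: ifP => _; first lia.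
rewrite (cd_sym _ 0); lia.
Qed.

Lemma Pd_sym n i p j q : Pd n i p j q = Pd n j q i p.
Proof.
rewrite /Pd; case: (ltngtP i j) => h.
- lia.
- lia.
- by subst j; rewrite cd_sym.
Qed.

Lemma NK m n i : good m n -> i < m -> n i.+1 = (Kc n i).*2.+1.
Proof.
move=> g /g [_ o]; rewrite /Kc -[in LHS](odd_double_half (n i.+1)) o; lia.
Qed.

Lemma HK m n i : good m n -> i < m -> Hc n i = (Kc n i).+1.
Proof.
move=> g hi; rewrite /Hc (NK g hi) addn1 -doubleS; exact: doubleK.
Qed.

Lemma K2 m n i : good m n -> i < m -> 2 <= Kc n i.
Proof. move=> g hi; have [h _] := g _ hi; rewrite /Kc; move: h (NK g hi); rewrite /Kc; lia. Qed.

Lemma Sc0 n a : Sc n a a = 0.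
Proof. by rewrite /Sc big_geq. Qed.
Lemma ScL n a b : a < b -> Sc n a b = Kc n a + Sc n a.+1 b.
Proof. by move=> h; rewrite /Sc big_ltn. Qed.
Lemma ScR n a b : a <= b -> Sc n a b.+1 = Sc n a b + Kc n b.
Proof. by move=> h; rewrite /Sc big_nat_recr. Qed.

Lemma Pd_entry m n i j q : good m n -> 0 < i < m -> j < m -> q < n j.+1 ->
  Pd n i 0 j q = Pd n i.-1 (Hc n i.-1) j q.
Proof.
move=> g /andP[]; case: i => // i _ him hj hq /=.
have hi : i < m by lia.
have eN := NK g him; have eN' := NK g hi; have eH := HK g him; have eH' := HK g hi.
have eNj := NK g hj; have eHj := HK g hj.
rewrite /Pd; case: (ltngtP i.+1 j) => h1.
- have -> : (i == j) = false by apply/eqP; lia.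
  rewrite (ScL n h1) eN eH eH' cd_0H cd_xx; lia.
- case: (ltngtP i j) => h2; first lia.
  + have -> : Sc n j.+1 i.+1 = Sc n j.+1 i + Kc n i by apply: ScR.
    rewrite eN' eH' cd_0H cd_xx; lia.
  + by subst j; rewrite Sc0 cd_xx (cd_sym _ q) !addn0.
- subst j; rewrite ltn_eqF // Sc0 cd_xx; lia.
Qed.

Definition D m n (x y : chain_vert m n) := Pd n (ci x) (cp x) (ci y) (cp y).

Lemma rep_self m n (x : chain_vert m n) : rep (ci x) (cp x) x.
Proof. by rewrite /rep !eqxx. Qed.

Lemma rep_Pd m n i p (x : chain_vert m n) j q : good m n -> i < m -> rep i p x ->
  j < m -> q < n j.+1 -> Pd n i p j q = Pd n (ci x) (cp x) j q.
Proof.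
move=> g hi /orP[/andP[/eqP-> /eqP->]//|/and4P[i0 /eqP-> /eqP e1 /eqP e2]] hj hq.
rewrite (Pd_entry g _ hj hq) ?i0 // e2 -e1 /= /Hc.
by rewrite -e1 /= in hi *.
Qed.

Lemma rep_ex m n i p : good m n -> i < m -> p < n i.+1 -> exists y : chain_vert m n, rep i p y.
Proof.
move=> g hi hp.
case: (boolP ((i == 0) || (p != 0))) => hc.
  by have [y [e1 e2]] := cv_ex hi hp hc; exists y; rewrite /rep e1 e2 !eqxx.
move: hc; rewrite negb_or negbK => /andP[i0 /eqP p0].
case: i i0 hi hp => // i _ hi hp.
have hi' : i < m by lia.
have e := NK g hi'; have eH := HK g hi'.
have hp' : (n i.+1 + 1)./2 < n i.+1.
  by change ((n i.+1 + 1)./2) with (Hc n i); rewrite eH e; have := K2 g hi'; lia.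
have hc : (i == 0) || ((n i.+1 + 1)./2 != 0) by rewrite /Hc in eH; rewrite eH orbT.
have [y [e1 e2]] := cv_ex hi' hp' hc; exists y.
by rewrite /rep e1 e2 p0 !eqxx /= orbT.
Qed.

Lemma tgt_lt m n i j q : good m n -> i < m -> j < m -> q < n j.+1 -> tgt n i j q < n i.+1.
Proof.
move=> g hi hj hq; rewrite /tgt; case: eqP => [->//|_].
have := K2 g hi; have := NK g hi; have := HK g hi; case: ifP => _; lia.
Qed.

Lemma D_lip m n (x y v : chain_vert m n) : good m n -> chain_adj m n x y -> D x v <= (D y v).+1.
Proof.
move=> g /adjE[i [p [q [hi hp hq /and3P[hpq hx hy]]]]].
rewrite /D -(rep_Pd g hi hx (ci_lt v) (cp_lt v)) -(rep_Pd g hi hy (ci_lt v) (cp_lt v)).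
rewrite !Pd_split -addnS leq_add2l.
have ht := tgt_lt g hi (ci_lt v) (cp_lt v).
move: hp hq ht hpq; rewrite (NK g hi) => hp hq ht hpq.
exact: cd_lip.
Qed.

Lemma D_step m n i p (x v : chain_vert m n) : good m n -> i < m -> p < n i.+1 -> rep i p x ->
  0 < cd (n i.+1) p (tgt n i (ci v) (cp v)) ->
  exists y, chain_adj m n x y /\ (D y v).+1 = D x v.
Proof.
move=> g hi hp hx hpos.
have ht := tgt_lt g hi (ci_lt v) (cp_lt v).
move: hp ht hpos; rewrite (NK g hi) => hp ht hpos.
have [q [hq hpq hd]] := cd_desc hp ht hpos.
rewrite -(NK g hi) in hq hpq hd hp.
have [y hy] := rep_ex g hi hq.
exists y; split.
  by apply/adjE; exists i, p, q; split => //; rewrite hpq hx hy.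
rewrite /D -(rep_Pd g hi hx (ci_lt v) (cp_lt v)) -(rep_Pd g hi hy (ci_lt v) (cp_lt v)).
by rewrite !Pd_split -hd addnS.
Qed.

Lemma D_desc m n (x v : chain_vert m n) : good m n -> 0 < D x v ->
  exists y, chain_adj m n x y /\ (D y v).+1 = D x v.
Proof.
move=> g hpos.
have hx := ci_lt x; have hpx := cp_lt x.
case: (posnP (cd (n (ci x).+1) (cp x) (tgt n (ci x) (ci v) (cp v)))) => hc; last first.
  exact: (D_step g hx hpx (rep_self x) hc).
rewrite /D Pd_split hc addn0 in hpos.
have ht := tgt_lt g hx (ci_lt v) (cp_lt v).
move: hc; rewrite {1}(NK g hx) => /eqP; rewrite cd_eq0 -?(NK g hx) // => /eqP ep.
move: hpos ep; rewrite /cst /tgt.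
case: eqP => // ne; case: (ltnP (ci x) (ci v)) => hlt hpos ep; last first.
  have := cp_canon x; rewrite ep eqxx orbF => /eqP c0; lia.
have hi1 : (ci x).+1 < m by have := ci_lt v; lia.
have hp1 : 0 < n (ci x).+2 by have := NK g hi1; lia.
have hr : rep (ci x).+1 0 x by rewrite /rep /= !eqxx /= ep /Hc eqxx orbT.
apply: (D_step g hi1 hp1 hr).
have ht1 := tgt_lt g hi1 (ci_lt v) (cp_lt v).
rewrite lt0n (NK g hi1) cd_eq0 -?(NK g hi1) //.
rewrite /tgt; case: ((ci x).+1 =P ci v) => [e|].
  by have := cp_canon v; rewrite -e /= eq_sym.
move=> ne1; have h2 : (ci x).+1 < ci v by lia.
by rewrite h2 (HK g hi1).
Qed.

Lemma D_zero m n (x v : chain_vert m n) : good m n -> D x v = 0 -> x = v.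
Proof.
move=> g; rewrite /D /Pd.
have hx := ci_lt x; have hv := ci_lt v.
have px := cp_lt x; have pv := cp_lt v.
case: eqP => [e|ne].
  move/eqP; rewrite (NK g hx) cd_eq0.
  - by move/eqP=> ep; exact: cv_ext.
  - by rewrite -(NK g hx).
  - by rewrite -(NK g hx) e.
case: ifP => hlt.
  move=> h; have : cd (n (ci v).+1) 0 (cp v) == 0 by apply/eqP; lia.
  rewrite (NK g hv) cd_eq0; last by rewrite -(NK g hv).
    move/eqP=> e; have := cp_canon v; rewrite -e eqxx orbF => /eqP c0; lia.
  by [].
move=> h; have : cd (n (ci x).+1) 0 (cp x) == 0 by apply/eqP; lia.
rewrite (NK g hx) cd_eq0; last by rewrite -(NK g hx).
  move/eqP=> e; have := cp_canon x; rewrite -e eqxx orbF => /eqP c0; lia.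
by [].
Qed.

Lemma dist_D m n (x v : chain_vert m n) : good m n -> dist (chain_adj m n) x v = D x v.
Proof.
move=> g; apply: (dist_char (f := fun x => D x v)).
- by rewrite /D /Pd eqxx cd_xx.
- by move=> y; apply: D_zero.
- by move=> a b; apply: D_lip.
- by move=> a; apply: D_desc.
Qed.

Definition cutv m n (x : chain_vert m n) := (cp x == Hc n (ci x)) && ((ci x).+1 < m).

Lemma adj_noncut m n (x w : chain_vert m n) : good m n -> ~~ cutv x -> chain_adj m n x w ->
  exists q, [/\ q < n (ci x).+1, cadj (n (ci x).+1) (cp x) q & rep (ci x) q w].
Proof.
move=> g hc /adjE[i [p [q [hi hp hq /and3P[hpq hx hw]]]]].
move: hx; rewrite /rep => /orP[/andP[/eqP ei /eqP ep]|/and4P[i0 /eqP p0 /eqP e1 /eqP e2]].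
  by subst i p; exists q.
exfalso; move: hc; rewrite /cutv e2 /Hc -e1 /= eqxx /=; lia.
Qed.

Lemma MD_crit m n (x v : chain_vert m n) : good m n -> ~~ cutv x ->
  cd (n (ci x).+1) (cp x) (tgt n (ci x) (ci v) (cp v)) = Kc n (ci x) ->
  max_dist_from (chain_adj m n) x v.
Proof.
move=> g hc hk; apply/forallP => w; apply/implyP => hw.
rewrite !dist_D // /D Pd_sym.
have [q [hq hpq hr]] := adj_noncut g hc hw.
rewrite -(rep_Pd g (ci_lt x) hr (ci_lt v) (cp_lt v)) !Pd_split leq_add2l hk.
have ht := tgt_lt g (ci_lt x) (ci_lt v) (cp_lt v).
move: hq ht; rewrite (NK g (ci_lt x)); exact: cd_le.
Qed.

Lemma SR_L1 m n (x y : chain_vert m n) : good m n -> ci x = ci y -> ~~ cutv x -> ~~ cutv y ->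
  cd (n (ci x).+1) (cp x) (cp y) = Kc n (ci x) -> strong_resolving_graph (chain_adj m n) x y.
Proof.
move=> g e hx hy hk; rewrite /strong_resolving_graph /mutually_max_dist.
have K2x := K2 g (ci_lt x).
apply/and3P; split.
- by apply/eqP => exy; subst y; move: hk; rewrite cd_xx; lia.
- by apply: MD_crit => //; rewrite /tgt e eqxx -e.
- by apply: MD_crit => //; rewrite /tgt e eqxx -e cd_sym.
Qed.

Lemma SR_L2 m n (x y : chain_vert m n) : good m n -> ci x < ci y -> cp x <= 1 -> ~~ cutv y ->
  (cp y == Kc n (ci y)) || (cp y == (Kc n (ci y)).+1) -> strong_resolving_graph (chain_adj m n) x y.
Proof.
move=> g e hx hy hk; rewrite /strong_resolving_graph /mutually_max_dist.
have K2x := K2 g (ci_lt x); have K2y := K2 g (ci_lt y).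
have eNx := NK g (ci_lt x); have eNy := NK g (ci_lt y); have eHx := HK g (ci_lt x).
apply/and3P; split.
- by apply/eqP => exy; move: e; rewrite exy ltnn.
- apply: MD_crit => //.
  + by rewrite /cutv eHx; apply/nandP; left; lia.
  + rewrite /tgt (ltn_eqF e) e eHx eNx /cd /absd; lia.
- apply: MD_crit => //.
  rewrite /tgt (gtn_eqF e) ltnNge (ltnW e) /= eNy /cd /absd; lia.
Qed.

Lemma nMD_U2 m n (x y : chain_vert m n) : good m n -> ci x < ci y ->
  2 <= cp x <= (Kc n (ci x)).+1 -> ~~ max_dist_from (chain_adj m n) x y.
Proof.
move=> g e /andP[h1 h2].
have hx := ci_lt x; have px := cp_lt x.
have eN := NK g hx; have eH := HK g hx; have K2x := K2 g hx.
have hq : cp x - 1 < n (ci x).+1 by lia.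
have hc : (ci x == 0) || (cp x - 1 != 0) by apply/orP; right; apply/eqP; lia.
have [w [ew pw]] := cv_ex (ci_lt _) hq hc.
have hadj : chain_adj m n x w.
  apply/adjE; exists (ci x), (cp x), (cp x - 1); split => //.
  rewrite rep_self /rep ew pw !eqxx /= andbT /cadj.
  by apply/orP; right; rewrite subnK ?modn_small //; lia.
apply/forallP => /(_ w); rewrite hadj /= !dist_D // /D Pd_sym ew pw.
rewrite !Pd_split leq_add2l /tgt (ltn_eqF e) e eH eN /cd /absd; lia.
Qed.

Lemma nMD_U1 m n (x y : chain_vert m n) : good m n -> ci x = ci y ->
  2 <= cp x -> cp x < cp y -> cp y <= (Kc n (ci y)).+1 -> ~~ max_dist_from (chain_adj m n) y x.
Proof.
move=> g e h1 h2 h3.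
have hy := ci_lt y; have py := cp_lt y.
have eN := NK g hy; have K2y := K2 g hy.
have hq : cp y + 1 < n (ci y).+1 by lia.
have hc : (ci y == 0) || (cp y + 1 != 0) by apply/orP; right; apply/eqP; lia.
have [w [ew pw]] := cv_ex (ci_lt _) hq hc.
have hadj : chain_adj m n y w.
  apply/adjE; exists (ci y), (cp y), (cp y + 1); split => //.
  rewrite rep_self /rep ew pw !eqxx /= andbT /cadj.
  by rewrite (modn_small hq) eqxx.
apply/forallP => /(_ w); rewrite hadj /= !dist_D // /D ew pw e /Pd !eqxx eN /cd /absd; lia.
Qed.

Definition inI m n (x : chain_vert m n) := (2 <= cp x) && (cp x <= (Kc n (ci x)).+1).

Lemma indep m n (x y : chain_vert m n) : good m n -> inI x -> inI y ->
  ~~ strong_resolving_graph (chain_adj m n) x y.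
Proof.
move=> g hx hy; rewrite /strong_resolving_graph /mutually_max_dist.
case: (ltngtP (ci x) (ci y)) => e.
- by rewrite (negbTE (nMD_U2 g e hx)) andbF.
- by rewrite (negbTE (nMD_U2 g e hy)) !andbF.
move: hx hy; rewrite /inI => /andP[hx1 hx2] /andP[hy1 hy2].
case: (ltngtP (cp x) (cp y)) => ep.
- by rewrite (negbTE (nMD_U1 g e hx1 ep hy2)) !andbF.
- by rewrite (negbTE (nMD_U1 g (esym e) hy1 ep hx2)) !andbF.
- by rewrite (cv_ext e ep) eqxx.
Qed.

Lemma card_part m n (A : {set chain_vert m n}) :
  #|A| = \sum_(i < m) #|[set x in A | ci x == i]|.
Proof.
rewrite -sum1_card (partition_big (fun x : chain_vert m n => tag (val x)) predT) //=.
apply: eq_bigr => i _; rewrite -sum1_card; apply: eq_bigl => x.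
by rewrite !inE.
Qed.

Lemma card_cycle m n i (Q : nat -> bool) : i < m ->
  #|[set x : chain_vert m n | (ci x == i) && Q (cp x)]| =
  count (fun p => ((i == 0) || (p != 0)) && Q p) (iota 0 (n i.+1)).
Proof.
move=> hi; set A := [set x : chain_vert m n | _].
pose P := fun p => ((i == 0) || (p != 0)) && Q p.
have u1 : uniq (map (@cp m n) (enum A)).
  rewrite map_inj_in_uniq ?enum_uniq // => x y.
  rewrite !mem_enum !inE => /andP[/eqP ex _] /andP[/eqP ey _] e.
  by apply: cv_ext => //; rewrite ex ey.
have u2 : uniq (filter P (iota 0 (n i.+1))) by rewrite filter_uniq ?iota_uniq.
have e : map (@cp m n) (enum A) =i filter P (iota 0 (n i.+1)).
  move=> p; rewrite mem_filter mem_iota add0n /=.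
  apply/mapP/andP => [[x] | [hp hpn]].
    rewrite mem_enum inE => /andP[/eqP ex hq] ->.
    split; first by rewrite /P /= -ex cp_canon hq.
    by rewrite -ex; apply: cp_lt.
  move: hp; rewrite /P => /andP[hc hq].
  have [x [ex epx]] := cv_ex hi hpn hc.
  by exists x => //; rewrite mem_enum inE ex eqxx epx hq.
by rewrite cardE -(size_map (@cp m n)) (perm_size (uniq_perm u1 u2 e)) size_filter.
Qed.

Lemma count_iota_const (P : pred nat) (b : bool) a l :
  (forall p, a <= p < a + l -> P p = b) -> count P (iota a l) = b * l.
Proof.
move=> h; rewrite (eq_in_count (a2 := fun _ => b)); last first.
  by move=> p; rewrite mem_iota => /h.
by elim: l a {h} => [|l IH] a /=; [rewrite muln0 | rewrite IH mulnS].
Qed.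

Lemma count_S0 K i : 2 <= K ->
  count (fun p => ((i == 0) || (p != 0)) && ~~ ((2 <= p) && (p <= K.+1))) (iota 0 K.*2.+1) =
  (i == 0) + K.
Proof.
move=> hK.
have -> : iota 0 K.*2.+1 = [:: 0; 1] ++ iota 2 K ++ iota K.+2 (K - 1).
  rewrite (_ : K.*2.+1 = 2 + (K + (K - 1))); last lia.
  by rewrite !iotaD (_ : 2 + K = K.+2) //; lia.
rewrite !count_cat /=.
rewrite (count_iota_const (b := false)); last by move=> p hp; apply/negbTE; lia.
rewrite (count_iota_const (b := true)); last by move=> p hp; apply/andP; split; [apply/orP; right|]; lia.
by case: (i == 0) => /=; lia.
Qed.

Definition pos K t := (t * K) %% K.*2.+1.

Lemma pos_lt K t : pos K t < K.*2.+1.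
Proof. by rewrite /pos ltn_mod. Qed.

Lemma coprimeNK K : coprime K.*2.+1 K.
Proof.
by rewrite /coprime gcdnC -addn1 -mul2n gcdnMDl gcdn1.
Qed.

Lemma pos_inj K t1 t2 : t1 < K.*2.+1 -> t2 < K.*2.+1 -> pos K t1 = pos K t2 -> t1 = t2.
Proof.
wlog le : t1 t2 / t1 <= t2.
  move=> W h1 h2 e; case: (leqP t1 t2) => h; first exact: W.
  by apply/esym; apply: W => //; exact: ltnW.
move=> h1 h2 /eqP; rewrite /pos eq_sym eqn_mod_dvd ?leq_mul2r ?le ?orbT // -mulnBl.
rewrite Gauss_dvdl ?coprimeNK //.
case: (posnP (t2 - t1)) => h; first by lia.
by move/(dvdn_leq h); lia.
Qed.

Lemma pos0 K : pos K 0 = 0.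
Proof. by rewrite /pos mul0n mod0n. Qed.

Lemma pos1 K : pos K 1 = K.
Proof. by rewrite /pos mul1n modn_small //; lia. Qed.

Lemma pos2K K : 1 <= K -> pos K K.*2 = K.+1.
Proof.
move=> h; rewrite /pos (_ : K.*2 * K = (K - 1) * K.*2.+1 + K.+1); last by nia.
by rewrite modnMDl modn_small //; lia.
Qed.

Lemma pos2K1 K : 1 <= K -> pos K (K.*2 - 1) = 1.
Proof.
move=> h; rewrite /pos (_ : (K.*2 - 1) * K = (K - 1) * K.*2.+1 + 1); last by nia.
by rewrite modnMDl modn_small //; lia.
Qed.

Lemma posS K t : pos K t.+1 = (pos K t + K) %% K.*2.+1.
Proof. by rewrite /pos mulSn addnC modnDml. Qed.

Lemma cd_pos K t : 1 <= K -> cd K.*2.+1 (pos K t) (pos K t.+1) = K.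
Proof.
move=> hK; rewrite posS; have := pos_lt K t; move: (pos K t) => p hp.
case: (ltnP (p + K) K.*2.+1) => h.
  by rewrite modn_small // /cd /absd; lia.
rewrite (_ : p + K = (p + K - K.*2.+1) + K.*2.+1); last lia.
by rewrite modnDr modn_small /cd /absd; lia.
Qed.

Definition vof m n (x0 : chain_vert m n) i p :=
  odflt x0 [pick x | (ci x == i) && (cp x == p)].

Lemma vof_spec m n (x0 : chain_vert m n) i p : i < m -> p < n i.+1 -> (i == 0) || (p != 0) ->
  ci (vof x0 i p) = i /\ cp (vof x0 i p) = p.
Proof.
move=> hi hp hc; rewrite /vof; case: pickP => [x /andP[/eqP -> /eqP ->] //|h].
have [x [e1 e2]] := cv_ex hi hp hc.
by have := h x; rewrite e1 e2 !eqxx.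
Qed.

Lemma last_iota a l : last a (iota a.+1 l) = a + l.
Proof. by elim: l a => [|l IH] a /=; rewrite ?addn0 // IH addnS. Qed.

Lemma path_iota (r : rel nat) a l : (forall t, a <= t < a + l -> r t t.+1) -> path r a (iota a.+1 l).
Proof.
elim: l a => [|l IH] a h //=; apply/andP; split; first by apply: h; lia.
by apply: IH => t ht; apply: h; lia.
Qed.

Lemma cover_rel m n (C : {set chain_vert m n}) :
  vertex_cover (strong_resolving_graph (chain_adj m n)) C ->
  forall x y, strong_resolving_graph (chain_adj m n) x y -> (x \in C) || (y \in C).
Proof. by move=> /forallP h x y; move: (h x) => /forallP /(_ y) /implyP. Qed.

Lemma cyc_lb m n (C : {set chain_vert m n}) (x0 : chain_vert m n) i a l :
  good m n -> vertex_cover (strong_resolving_graph (chain_adj m n)) C -> i < m ->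
  a + l <= (Kc n i).*2 ->
  (forall t, a <= t <= a + l ->
     ((i == 0) || (pos (Kc n i) t != 0)) && ((pos (Kc n i) t != (Kc n i).+1) || (i.+1 == m))) ->
  l + (vof x0 i (pos (Kc n i) a) \in C) + (vof x0 i (pos (Kc n i) (a + l)) \in C)
    <= 2 * #|[set x in C | ci x == i]|.
Proof.
move=> g hC hi hal hok.
set K := Kc n i.
have eN := NK g hi; have eH := HK g hi; have K2i := K2 g hi.
pose f t := vof x0 i (pos K t).
have fs : forall t, a <= t <= a + l -> ci (f t) = i /\ cp (f t) = pos K t.
  move=> t ht; apply: vof_spec => //; first by rewrite eN pos_lt.
  by case/andP: (hok t ht).
have nc : forall t, a <= t <= a + l -> ~~ cutv (f t).
  move=> t ht; have [e1 e2] := fs t ht; rewrite /cutv e1 e2 eH.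
  by case/andP: (hok t ht) => _ /orP[/negbTE -> // | /eqP ->]; rewrite ltnn andbF.
have hp : path (strong_resolving_graph (chain_adj m n)) (f a) (map f (iota a.+1 l)).
  rewrite path_map; apply: path_iota => t ht.
  have h1 : a <= t <= a + l by lia.
  have h2 : a <= t.+1 <= a + l by lia.
  have [e1 e2] := fs t h1; have [e3 e4] := fs t.+1 h2.
  have n1 := nc t h1; have n2 := nc t.+1 h2.
  rewrite /f in e1 e2 e3 e4 n1 n2 *.
  apply: SR_L1 => //; first by rewrite e1 e3.
  by rewrite e1 e2 e4 eN cd_pos //; lia.
have := path_cover (cover_rel hC) hp.
rewrite size_map size_iota last_map last_iota -map_cons -/(iota a l.+1) => H.
apply: (leq_trans H); rewrite leq_pmul2l //.
have u : uniq (map f (iota a l.+1)).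
  rewrite map_inj_in_uniq ?iota_uniq // => t1 t2.
  rewrite !mem_iota => ht1 ht2 e.
  have h1 : a <= t1 <= a + l by lia.
  have h2 : a <= t2 <= a + l by lia.
  have [_ c1] := fs t1 h1; have [_ c2] := fs t2 h2.
  rewrite e c2 in c1; apply: (pos_inj (K := K) _ _ (esym c1)); lia.
rewrite -size_filter.
have hu : uniq (filter (fun x => x \in C) (map f (iota a l.+1))) by rewrite filter_uniq.
move/card_uniqP: hu => <-.
apply: subset_leq_card; apply/subsetP => x; rewrite mem_filter => /andP[xC /mapP[t ht ex]]; subst x.
move: ht; rewrite mem_iota => ht.
have [e1 _] := fs t (ltac:(lia)).
by rewrite !inE xC e1 eqxx.
Qed.

Lemma sum_eq1 m k : k < m -> \sum_(i < m) (i == k :> nat) = 1.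
Proof.
move=> hk; rewrite (bigD1 (Ordinal hk)) //= eqxx big1 // => j hj.
by case: eqP => // e; move: hj; rewrite -val_eqE /= e eqxx.
Qed.

Lemma sum_ends m : 2 <= m -> \sum_(i < m) (((i : nat) == 0) || (i.+1 == m) :> nat) = 2.
Proof.
move=> hm.
rewrite (eq_bigr (fun i : 'I_m => (i == 0 :> nat) + (i == m.-1 :> nat))); last first.
  move=> i _; have -> : (i.+1 == m) = ((i : nat) == m.-1) by apply/eqP/eqP; lia.
  by case: ((i : nat) =P 0) => a; case: ((i : nat) =P m.-1) => b //=; lia.
by rewrite big_split /= !sum_eq1 //; lia.
Qed.

Lemma lower m n (C : {set chain_vert m n}) : 2 <= m -> good m n ->
  vertex_cover (strong_resolving_graph (chain_adj m n)) C ->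
  (\sum_(i < m) Kc n i).+1 <= #|C|.
Proof.
move=> hm g hC.
have [x0 _] := @cv_ex m n 0 0 (ltac:(lia)) (ltac:(have := NK g (ltac:(lia) : 0 < m); lia)) (erefl true).
pose v i p := vof x0 i p.
pose lo i := (v i 1 \notin C) || ((i == 0) && (v i 0 \notin C)).
pose ro i := (v i (Kc n i) \notin C) || ((i.+1 == m) && (v i (Kc n i).+1 \notin C)).
pose tight i := ((i.+1 == m) || lo i) && ((i == 0) || ro i).
pose base i := if (i == 0) || (i.+1 == m) then Kc n i else (Kc n i).-1.
have cross : forall i j, i < j -> j < m -> lo i -> ro j -> False.
  move=> i j hij hj hl hr.
  have hi : i < m by lia.
  have eNi := NK g hi; have eNj := NK g hj; have K2i := K2 g hi; have K2j := K2 g hj.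
  have [x [xC cx px]] : exists x, [/\ x \notin C, ci x = i & cp x <= 1].
    case/orP: hl => [h | /andP[/eqP i0 h]].
      have [e1 e2] := @vof_spec m n x0 i 1 hi (ltac:(lia)) (ltac:(apply/orP; right; done)).
      by exists (v i 1); rewrite e1 e2.
    have [e1 e2] := @vof_spec m n x0 i 0 hi (ltac:(lia)) (ltac:(by rewrite i0)).
    by exists (v i 0); rewrite e1 e2.
  have [y [yC cy py nc]] : exists y, [/\ y \notin C, ci y = j,
       (cp y == Kc n j) || (cp y == (Kc n j).+1) & ~~ cutv y].
    have eH := HK g hj.
    case/orP: hr => [h | /andP[/eqP jm h]].
      have [e1 e2] := @vof_spec m n x0 j (Kc n j) hj (ltac:(lia)) (ltac:(apply/orP; right; apply/eqP; lia)).
      exists (v j (Kc n j)); rewrite /v e1 e2 eqxx; split => //.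
      by rewrite /cutv e1 e2 eH; apply/nandP; left; apply/eqP; lia.
    have [e1 e2] := @vof_spec m n x0 j (Kc n j).+1 hj (ltac:(lia)) (ltac:(apply/orP; right; apply/eqP; lia)).
    exists (v j (Kc n j).+1); rewrite /v e1 e2 eqxx orbT; split => //.
    by rewrite /cutv e1 jm ltnn andbF.
  have := cover_rel hC (@SR_L2 m n x y g (ltac:(by rewrite cx cy)) px nc (ltac:(by rewrite cy))).
  by rewrite (negbTE xC) (negbTE yC).
have percyc : forall i : 'I_m, base i + ~~ tight i <= #|[set x in C | ci x == i]|.
  move=> [i hi] /=.
  have eN := NK g hi; have K2i := K2 g hi.
  have p0 : forall t, t <= (Kc n i).*2 -> pos (Kc n i) t = 0 -> t = 0.
    move=> t ht e; apply: (pos_inj (K := Kc n i)); rewrite ?pos0 //; lia.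
  have pH : forall t, t <= (Kc n i).*2 -> pos (Kc n i) t = (Kc n i).+1 -> t = (Kc n i).*2.
    move=> t ht e; apply: (pos_inj (K := Kc n i)); rewrite ?pos2K //; lia.
  case: (i =P 0) => [i0 | inz].
    subst i.
    have H := @cyc_lb m n C x0 0 0 ((Kc n 0).*2 - 1) g hC hi (ltac:(lia))
      (fun t ht => ltac:(apply/andP; split => //; apply/orP; left; apply/eqP => e;
                         have := pH t (ltac:(lia)) e; lia)).
    rewrite pos0 add0n pos2K1 in H; last lia.
    move: H; rewrite /base /tight /lo /ro /v /= (_ : (1 == m) = false); last by apply/eqP; lia.
    by case: (vof x0 0 0 \in C); case: (vof x0 0 1 \in C) => /=; lia.
  case: (i.+1 =P m) => [im | inm].
    have H := @cyc_lb m n C x0 i 1 ((Kc n i).*2 - 1) g hC hi (ltac:(lia))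
      (fun t ht => ltac:(apply/andP; split; [apply/orP; right; apply/eqP => e;
                         have := p0 t (ltac:(lia)) e; lia | apply/orP; right; apply/eqP; lia])).
    rewrite pos1 (_ : 1 + ((Kc n i).*2 - 1) = (Kc n i).*2) in H; last lia.
    rewrite pos2K in H; last lia.
    move: H; rewrite /base /tight /lo /ro /v /= (_ : (i == 0) = false); last by apply/negbTE/eqP.
    rewrite im eqxx /=.
    by case: (vof x0 i (Kc n i) \in C); case: (vof x0 i (Kc n i).+1 \in C) => /=; lia.
  have H := @cyc_lb m n C x0 i 1 ((Kc n i).*2 - 2) g hC hi (ltac:(lia))
    (fun t ht => ltac:(apply/andP; split; [apply/orP; right | apply/orP; left]; apply/eqP => e;
                       [have := p0 t (ltac:(lia)) e | have := pH t (ltac:(lia)) e]; lia)).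
  rewrite pos1 (_ : 1 + ((Kc n i).*2 - 2) = (Kc n i).*2 - 1) in H; last lia.
  rewrite pos2K1 in H; last lia.
  move: H; rewrite /base /tight /lo /ro /v /= (_ : (i == 0) = false); last by apply/negbTE/eqP.
  rewrite (_ : (i.+1 == m) = false) /=; last by apply/negbTE/eqP.
  by case: (vof x0 i (Kc n i) \in C); case: (vof x0 i 1 \in C) => /=; lia.
have t1 : \sum_(i < m) (tight i : nat) <= 1.
  have -> : \sum_(i < m) (tight i : nat) = #|[pred i : 'I_m | tight i]|.
    by rewrite -sum1_card [RHS]big_mkcond; apply: eq_bigr => i _; rewrite inE; case: (tight i).
  rewrite leqNgt; apply/negP => /card_gt1P [x [y [hx hy nxy]]].
  rewrite !inE in hx hy.
  have W : forall a b : 'I_m, a < b -> tight a -> tight b -> False.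
    move=> a b hab ha hb.
    have hb' := ltn_ord b.
    move: ha hb; rewrite /tight (_ : (a.+1 == m) = false) /=; last by apply/negbTE/eqP; lia.
    rewrite (_ : (b == 0 :> nat) = false) /=; last by apply/negbTE/eqP; lia.
    by move=> /andP[ha _] /andP[_ hb]; exact: (cross a b hab hb' ha hb).
  case: (ltngtP x y) => e; [exact: (W x y)|exact: (W y x)|].
  by move: nxy; rewrite (val_inj e) eqxx.
have sb : \sum_(i < m) (base i + 1) = (\sum_(i < m) Kc n i) + 2.
  rewrite -(sum_ends hm) -big_split /=; apply: eq_bigr => i _.
  have := K2 g (ltn_ord i); rewrite /base.
  by case: ((i : nat) == 0); case: (i.+1 == m) => /=; lia.
have sp : \sum_(i < m) (base i + ~~ tight i) + \sum_(i < m) (tight i : nat)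
          = \sum_(i < m) (base i + 1).
  rewrite -big_split /=; apply: eq_bigr => i _; by case: (tight i); rewrite /= ?addn0.
have sc : \sum_(i < m) (base i + ~~ tight i) <= #|C|.
  by rewrite (card_part C); apply: leq_sum => i _; exact: percyc.
lia.
Qed.

Lemma bigmin_le_seq (I : eqType) (r : seq I) (P : pred I) (F : I -> nat) x i0 :
  i0 \in r -> P i0 -> \big[minn/x]_(i <- r | P i) F i <= F i0.
Proof.
elim: r => // a r IH; rewrite inE big_cons => /orP[/eqP <- -> | h hP].
  exact: geq_minl.
case: (P a); last exact: IH.
by apply: leq_trans (geq_minr _ _) (IH h hP).
Qed.

Lemma upper m n : 2 <= m -> good m n ->
  exists S : {set chain_vert m n},
    vertex_cover (strong_resolving_graph (chain_adj m n)) S /\ #|S| = (\sum_(i < m) Kc n i).+1.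
Proof.
move=> hm g.
exists [set x | ~~ inI x]; split.
  apply/forallP => u; apply/forallP => v; apply/implyP => h; rewrite !inE -negb_and.
  by apply/negP => /andP[hu hv]; move: h; rewrite (negbTE (indep g hu hv)).
rewrite card_part.
rewrite (eq_bigr (fun i : 'I_m => ((i : nat) == 0) + Kc n i)); last first.
  move=> i _.
  have -> : [set x in [set x : chain_vert m n | ~~ inI x] | ci x == i] =
     [set x : chain_vert m n | (ci x == i) && ~~ ((2 <= cp x) && (cp x <= (Kc n i).+1))].
    apply/setP => x; rewrite !inE /inI andbC.
    by case: eqP => // ->.
  by rewrite (@card_cycle m n i (fun p => ~~ ((2 <= p) && (p <= (Kc n i).+1))) (ltn_ord i)) (NK g (ltn_ord i)) count_S0 // (K2 g (ltn_ord i)).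
by rewrite big_split /= (sum_eq1 (ltnW hm)) add1n.
Qed.

Lemma rhs_eq m n : 2 <= m -> (forall i, 1 <= i <= m -> 5 <= n i /\ odd (n i)) ->
  m - 1 + (n 1)./2 + (n m)./2 + \sum_(2 <= i < m) (n i - 2)./2 = (\sum_(i < m) Kc n i).+1.
Proof.
move=> hm H.
have e1 : \sum_(2 <= i < m) (n i - 2)./2 + (m - 2) = \sum_(2 <= i < m) (n i)./2.
  have -> : m - 2 = \sum_(2 <= i < m) 1 by rewrite sum_nat_const_nat muln1.
  rewrite -big_split /=; apply: eq_big_nat => i hi.
  have [h5 _] := H i (ltac:(lia)).
  have -> : n i = (n i - 2) + 2 by lia.
  by rewrite addnK addn2 addn1.
have e2 : \sum_(i < m) Kc n i = (n 1)./2 + \sum_(2 <= i < m) (n i)./2 + (n m)./2.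
  have e : \sum_(1 <= i < m.+1) (n i)./2 = \sum_(0 <= i < m) (n i.+1)./2 by rewrite big_add1.
  rewrite -(big_mkord xpredT (fun i => (n i.+1)./2)) -e.
  rewrite big_ltn; last lia.
  rewrite big_nat_recr /=; last lia.
  by rewrite addnA.
rewrite e2; lia.
Qed.

Theorem lemma3p7 (m : nat) (n : nat -> nat) :
  2 <= m ->
  (forall i, 1 <= i <= m -> 5 <= n i /\ odd (n i)) ->
  vertex_cover_number (strong_resolving_graph (chain_adj m n)) =
    m - 1 + (n 1)./2 + (n m)./2 + \sum_(2 <= i < m) (n i - 2)./2.
Proof.
move=> hm H.
have g : good m n by move=> i hi; apply: H; lia.
rewrite (rhs_eq hm H).
apply/eqP; rewrite eqn_leq; apply/andP; split.
  have [S [hS cS]] := upper hm g.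
  rewrite /vertex_cover_number -cS.
  exact: (@bigmin_le_seq _ (index_enum _) _ (fun S0 : {set chain_vert m n} => #|S0|) _ S (mem_index_enum S) hS).
rewrite /vertex_cover_number; apply: (big_ind (fun x => (\sum_(i < m) Kc n i).+1 <= x)).
- have := lower (C := [set: chain_vert m n]) hm g.
  rewrite cardsT; apply.
  by apply/forallP => u; apply/forallP => v; rewrite in_setT implybT.
- by move=> a b ha hb; rewrite leq_min ha hb.
- by move=> S hS; apply: lower.
Qed.
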